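(* Fix $c_1\in(c_0,1)$, $c\in(c_0,c_1)$ and $R_0\in\mathcal{R}_c$, and for $0<\delta<\delta_0$ let $R_\delta=R_0-I_\delta+S_\delta$ be the travelling wave provided by the Main Theorem (so $S_\delta\in W^{2,\infty}(\mathbb{R})$, $S_\delta(0)=0$, $\|S_\delta\|_\infty\le C\delta^2$, $\|S_\delta'\|_\infty\le C\delta$, $\|S_\delta''\|_\infty\le C$, and $S_\delta$ has harmonic tails with wave number $k_c$ at $\pm\infty$, a limit at $+\infty$). Then the configurational forces satisfy $$\Upsilon_\delta=\Upsilon_0+O(\delta^2)\qquad(\delta\to0).$$
   Context: $\Delta_1F(x)=F(x+1)-2F(x)+F(x-1)$, $a(k)=\frac{\sin(k/2)}{k/2}$, $\Psi_0'(r)=\mathrm{sgn}(r)$, $\Phi_0(r)=\frac12r^2-|r|$. Potentials: $(\Psi_\delta)_{\delta>0}$ is a family of $C^2$ functions with $\Psi_\delta(0)=0$ such that $\Psi_\delta'(r)=\mathrm{sgn}(r)$ for $r\notin(-\delta,\delta)$, and $|\Psi_\delta'|\le C_\Psi$, $|\Psi_\delta''|\le C_\Psi/\delta$ on $\mathbb{R}$ with $C_\Psi$ independent of $\delta$; $\Phi_\delta(r)=\frac12r^2-\Psi_\delta(r)$; $I_\delta:=\frac12\int_{\mathbb{R}}(\Psi_\delta'-\Psi_0')\,dr$. Travelling waves solve $c^2R''=\Delta_1(R-\Psi_\delta'(R))$. Unperturbed waves (standing hypothesis, a known result): there are constants $0<c_0<1$ and $x_0,r_0,d_0,D_0>0$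 such that for every $c\in[c_0,1)$ the equation $a(k)=c$ has exactly one positive solution $k_c$, and there is a two-parameter family $\mathcal{R}_c$ of functions $R_0\in W^{2,\infty}(\mathbb{R})$ solving $c^2R_0''=\Delta_1(R_0-\mathrm{sgn}(R_0))$ with $R_0(0)=0$, given by $R_0=\bar R_0+\alpha(\cos(k_c\cdot)-1)+\beta\sin(k_c\cdot)$, $(\alpha,\beta)$ in an open neighbourhood $U_c$ of $0\in\mathbb{R}^2$, where $\bar R_0$ is a fixed member for which $\lim_{x\to+\infty}\bar R_0(x)$ exists and $\lim_{x\to-\infty}(\bar R_0(x)-\alpha_c^-(\cos(k_cx)-1)-\beta_c^-\sin(k_cx))$ exists for some constants $\alpha_c^-,\beta_c^-$. Every $R_0\in\mathcal{R}_c$ satisfies $\|R_0\|_\infty\le D_0(1-c^2)^{-1}$, $R_0(x)>r_0$ for $x>x_0$, $R_0(x)<-r_0$ for $x<-x_0$, $R_0'(x)>d_0$ for $|x|<x_0$. Configurational force of a wave $R_\delta$ (with $R_0$ corresponding to $\delta=0$): macroscopic strains $\bar r_{\delta,\pm}=\lim_{L\to\infty}\frac1L\int_0^L R_\delta(\pm x)\,dx$; $\Upsilon_{e,\delta}=\Phi_\delta(\bar r_{\delta,+})-\Phi_\delta(\bar r_{\delta,-})$, $\Upsilon_{f,\delta}=\frac12\big(\Phi_\delta'(\bar r_{\delta,+})+\Phi_\delta'(\bar r_{\delta,-})\big)(\bar r_{\delta,+}-\bar r_{\delta,-})$, and $\Upsilon_\delta=\Upsilon_{e,\delta}-\Upsilon_{f,\delta}$.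 *)

(* Defs.v *)
From Stdlib Require Import Reals Lra.
Open Scope R_scope.

(* sign function; the value at 0 is irrelevant for everything below *)
Definition sgn (r : R) : R :=
  if Rlt_dec 0 r then 1 else if Rlt_dec r 0 then -1 else 0.

Definition Delta1 (F : R -> R) (x : R) : R := F (x + 1) - 2 * F x + F (x - 1).

Definition adisp (k : R) : R := sin (k / 2) / (k / 2).

Definition lim_pinf (f : R -> R) (l : R) : Prop :=
  forall eps, 0 < eps -> exists M, forall x, M < x -> Rabs (f x - l) < eps.
Definition lim_minf (f : R -> R) (l : R) : Prop :=
  forall eps, 0 < eps -> exists M, forall x, x < M -> Rabs (f x - l) < eps.

Definition improper_int (f : R -> R) (l : R) : Prop :=
  forall eps, 0 < eps -> exists M, forall a b, a < - M -> M < b ->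
    exists pr : Riemann_integrable f a b, Rabs (RiemannInt pr - l) < eps.

(* macroscopic strain: lim_{L -> oo} (1/L) int_0^L f(x) dx = m *)
Definition mean_limit (f : R -> R) (m : R) : Prop :=
  forall eps, 0 < eps -> exists L0, 0 < L0 /\ forall L, L0 < L ->
    exists pr : Riemann_integrable f 0 L, Rabs (RiemannInt pr / L - m) < eps.

(* configurational force Upsilon = Upsilon_e - Upsilon_f for a potential Phi
   with derivative dPhi and macroscopic strains rp (at +oo) and rm (at -oo) *)
Definition Upsilon (Phi dPhi : R -> R) (rp rm : R) : R :=
  (Phi rp - Phi rm) - / 2 * (dPhi rp + dPhi rm) * (rp - rm).

Definition Phi0 (r : R) : R := / 2 * r ^ 2 - Rabs r.
Definition dPhi0 (r : R) : R := r - sgn r.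

Definition Phid (Psi : R -> R) (r : R) : R := / 2 * r ^ 2 - Psi r.
Definition dPhid (dPsi : R -> R) (r : R) : R := r - dPsi r.

Definition potential_family (Psi dPsi ddPsi : R -> R -> R) (CPsi : R) : Prop :=
  forall d, 0 < d ->
    (forall r, derivable_pt_lim (Psi d) r (dPsi d r)) /\
    (forall r, derivable_pt_lim (dPsi d) r (ddPsi d r)) /\
    continuity (ddPsi d) /\
    Psi d 0 = 0 /\
    (forall r, (r <= - d \/ d <= r) -> dPsi d r = sgn r) /\
    (forall r, Rabs (dPsi d r) <= CPsi) /\
    (forall r, Rabs (ddPsi d r) <= CPsi / d).

(* Main.v *)
Require Import Defs.
From Stdlib Require Import Reals Lra.
From Coquelicot Require Import Coquelicot.
Open Scope R_scope.

Lemma abs_le_elim x a : Rabs x <= a -> -a <= x <= a.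
Proof. unfold Rabs; destruct (Rcase_abs x); lra. Qed.

Lemma abs_le_intro x a : -a <= x <= a -> Rabs x <= a.
Proof. unfold Rabs; destruct (Rcase_abs x); lra. Qed.

Lemma abs_lt_elim x a : Rabs x < a -> -a < x < a.
Proof. unfold Rabs; destruct (Rcase_abs x); lra. Qed.

Lemma le_by_eps x y : (forall eps, 0 < eps -> x <= y + eps) -> x <= y.
Proof.
  intros H. destruct (Rle_dec x y) as [h|h]; [exact h|].
  specialize (H ((x - y)/2)). lra.
Qed.

Lemma mean_diff (F f : R -> R) m1 m2 a B :
  mean_limit F m1 -> mean_limit f m2 ->
  (forall x, Rabs (F x - f x - a) <= B) -> Rabs (m1 - m2 - a) <= B.
Proof.
  intros H1 H2 HB. apply abs_le_intro.
  assert (forall eps, 0 < eps -> -B - 2*eps <= m1 - m2 - a <= B + 2*eps).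
  { intros eps He.
    destruct (H1 eps He) as [L1 [HL1 H1']]. destruct (H2 eps He) as [L2 [HL2 H2']].
    set (L := Rmax L1 L2 + 1).
    assert (L1 < L) by (unfold L; generalize (Rmax_l L1 L2); lra).
    assert (L2 < L) by (unfold L; generalize (Rmax_r L1 L2); lra).
    destruct (H1' L ltac:(lra)) as [pr1 E1]. destruct (H2' L ltac:(lra)) as [pr2 E2].
    pose (pr3 := @RiemannInt_P10 F f 0 L (-1) pr1 pr2).
    assert (Eq := RiemannInt_P13 pr1 pr2 pr3).
    assert (Bd := @RiemannInt_const_bound _ 0 L (a - B) (a + B) pr3 ltac:(lra)
              ltac:(intros x _; generalize (abs_le_elim _ _ (HB x)); lra)).
    rewrite Eq in Bd.
    set (I1 := RiemannInt pr1) in *. set (I2 := RiemannInt pr2) in *.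
    apply abs_lt_elim in E1. apply abs_lt_elim in E2.
    assert (I1 = I1 / L * L) by (field; lra).
    assert (I2 = I2 / L * L) by (field; lra).
    set (q1 := I1 / L) in *. set (q2 := I2 / L) in *.
    assert (HL : 0 < L) by lra.
    assert (a - B <= q1 - q2 <= a + B).
    { split; apply (Rmult_le_reg_r L); try lra; nra. }
    lra. }
  split.
  - assert (-B <= m1 - m2 - a + 0); [|lra].
    apply le_by_eps. intros e He. destruct (H (e/2) ltac:(lra)). lra.
  - apply le_by_eps. intros e He. destruct (H (e/2) ltac:(lra)). lra.
Qed.

Lemma int_split_bound (f : R -> R) x0 L M lo hi (pr : Riemann_integrable f 0 L) :
  0 < x0 -> x0 < L -> (forall x, Rabs (f x) <= M) ->
  (forall x, x0 < x -> lo <= f x <= hi) ->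
  lo * (L - x0) - M * x0 <= RiemannInt pr <= hi * (L - x0) + M * x0.
Proof.
  intros Hx0 HL HM Hf.
  pose (prA := RiemannInt_P22 pr (conj (Rlt_le _ _ Hx0) (Rlt_le _ _ HL))).
  pose (prB := RiemannInt_P23 pr (conj (Rlt_le _ _ Hx0) (Rlt_le _ _ HL))).
  rewrite <- (RiemannInt_P26 prA prB pr).
  assert (BA := @RiemannInt_const_bound _ 0 x0 (-M) M prA ltac:(lra)
              ltac:(intros x _; exact (abs_le_elim _ _ (HM x)))).
  assert (BB := @RiemannInt_const_bound _ x0 L lo hi prB ltac:(lra)
              ltac:(intros x [h _]; exact (Hf x h))).
  lra.
Qed.

Lemma mean_bounds (f : R -> R) m M x0 lo hi :
  0 < x0 -> mean_limit f m -> (forall x, Rabs (f x) <= M) ->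
  (forall x, x0 < x -> lo <= f x <= hi) -> lo <= m <= hi.
Proof.
  intros Hx0 Hm HM Hf.
  assert (HM0 : 0 <= M) by (generalize (HM 0) (Rabs_pos (f 0)); lra).
  assert (forall eps, 0 < eps -> lo - 2*eps <= m <= hi + 2*eps).
  { intros eps He. destruct (Hm eps He) as [L0 [HL0 H']].
    set (L := Rmax L0 (Rmax x0 ((Rabs lo + Rabs hi + M) * x0 / eps)) + 1).
    assert (L0 < L) by (unfold L; generalize (Rmax_l L0 (Rmax x0 ((Rabs lo + Rabs hi + M) * x0 / eps))); lra).
    assert (Hr : Rmax x0 ((Rabs lo + Rabs hi + M) * x0 / eps) < L)
      by (unfold L; generalize (Rmax_r L0 (Rmax x0 ((Rabs lo + Rabs hi + M) * x0 / eps))); lra).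
    assert (x0 < L) by (generalize (Rmax_l x0 ((Rabs lo + Rabs hi + M) * x0 / eps)); lra).
    assert (HQ : (Rabs lo + Rabs hi + M) * x0 / eps < L)
      by (generalize (Rmax_r x0 ((Rabs lo + Rabs hi + M) * x0 / eps)); lra).
    destruct (H' L ltac:(lra)) as [pr E].
    assert (Bd := int_split_bound f x0 L M lo hi pr Hx0 ltac:(lra) HM Hf).
    apply abs_lt_elim in E.
    set (I := RiemannInt pr) in *.
    assert (I = I / L * L) by (field; lra).
    set (q := I / L) in *.
    assert (HL : 0 < L) by lra.
    assert (HQ' : (Rabs lo + Rabs hi + M) * x0 < eps * L).
    { apply (Rmult_lt_compat_r eps) in HQ; [|lra].
      replace ((Rabs lo + Rabs hi + M) * x0 / eps * eps) with ((Rabs lo + Rabs hi + M) * x0) in HQ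
        by (field; lra). lra. }
    generalize (Rabs_pos lo) (Rabs_pos hi) (Rle_abs lo) (Rle_abs hi) (Rle_abs (-lo)) (Rle_abs (-hi)).
    rewrite !Rabs_Ropp. intros.
    split.
    - assert (lo - eps <= q); [|lra].
      apply (Rmult_le_reg_r L); [lra|]. nra.
    - assert (q <= hi + eps); [|lra].
      apply (Rmult_le_reg_r L); [lra|]. nra. }
  split.
  - assert (lo <= m + 0); [|lra].
    apply le_by_eps. intros e He. destruct (H (e/2) ltac:(lra)). lra.
  - apply le_by_eps. intros e He. destruct (H (e/2) ltac:(lra)). lra.
Qed.

Lemma sgn_pos r : 0 < r -> sgn r = 1.
Proof. intros h; unfold sgn; destruct (Rlt_dec 0 r); [reflexivity|lra]. Qed.
Lemma sgn_neg r : r < 0 -> sgn r = -1.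
Proof. intros h; unfold sgn; destruct (Rlt_dec 0 r); [lra|]; destruct (Rlt_dec r 0); [reflexivity|lra]. Qed.

Section PsiSec.
Variables (Psi dPsi ddPsi : R -> R -> R) (CPsi : R).
Hypothesis HPsi : potential_family Psi dPsi ddPsi CPsi.

Lemma psi_const_pos d x y : 0 < d -> d <= x -> x <= y -> Psi d y - y = Psi d x - x.
Proof.
  intros Hd Hx Hy. destruct (HPsi d Hd) as [Hder [_ [_ [_ [Hs _]]]]].
  destruct (MVT_abs (fun r => Psi d r - r) (fun r => dPsi d r - 1) x y) as [c [Hc Hc2]].
  - intros c Hc. apply derivable_pt_lim_minus; [apply Hder|apply derivable_pt_lim_id].
  - rewrite Rmin_left in Hc2 by lra. rewrite Rmax_right in Hc2 by lra.
    assert (Hcd : c <= - d \/ d <= c) by (right; lra). rewrite (Hs c Hcd), sgn_pos in Hc by lra.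
    replace (1 - 1) with 0 in Hc by ring. rewrite Rabs_R0, Rmult_0_l in Hc.
    generalize (Rabs_pos_lt (Psi d y - y - (Psi d x - x))). 
    destruct (Req_dec (Psi d y - y - (Psi d x - x)) 0); [lra|]. intros h; specialize (h H); lra.
Qed.

Lemma psi_const_neg d x y : 0 < d -> x <= -d -> y <= x -> Psi d y + y = Psi d x + x.
Proof.
  intros Hd Hx Hy. destruct (HPsi d Hd) as [Hder [_ [_ [_ [Hs _]]]]].
  destruct (MVT_abs (fun r => Psi d r + r) (fun r => dPsi d r + 1) x y) as [c [Hc Hc2]].
  - intros c Hc. apply derivable_pt_lim_plus; [apply Hder|apply derivable_pt_lim_id].
  - rewrite Rmin_right in Hc2 by lra. rewrite Rmax_left in Hc2 by lra.
    assert (Hcd : c <= - d \/ d <= c) by (left; lra). rewrite (Hs c Hcd), sgn_neg in Hc by lra.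
    replace (-1 + 1) with 0 in Hc by ring. rewrite Rabs_R0, Rmult_0_l in Hc.
    generalize (Rabs_pos_lt (Psi d y + y - (Psi d x + x))). 
    destruct (Req_dec (Psi d y + y - (Psi d x + x)) 0); [lra|]. intros h; specialize (h H); lra.
Qed.

Lemma dpsi_cont d x : 0 < d -> continuous (dPsi d) x.
Proof.
  intros Hd. destruct (HPsi d Hd) as [_ [Hd2 _]].
  apply continuity_pt_filterlim. apply derivable_continuous_pt.
  exists (ddPsi d x). apply Hd2.
Qed.

Lemma int_formula d a b : 0 < d -> a < 0 -> 0 < b ->
  is_RInt (fun r => dPsi d r - sgn r) a b (Psi d b - b - (Psi d a + a)).
Proof.
  intros Hd Ha Hb. destruct (HPsi d Hd) as [Hder _].
  replace (Psi d b - b - (Psi d a + a)) with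
    (plus (minus (Psi d 0 + 0) (Psi d a + a)) (minus (Psi d b - b) (Psi d 0 - 0))).
  2:{ unfold plus, minus, opp; simpl. unfold plus, opp; simpl. ring. }
  apply (@is_RInt_Chasles R_NormedModule _ a 0 b).
  - apply is_RInt_ext with (fun r => dPsi d r + 1).
    + intros x Hx. rewrite Rmin_left in Hx by lra. rewrite Rmax_right in Hx by lra.
      rewrite sgn_neg by lra. change (dPsi d x + 1 = dPsi d x - -1). ring.
    + apply (@is_RInt_derive R_CompleteNormedModule (fun r => Psi d r + r) (fun r => dPsi d r + 1) a 0).
      * intros x _. apply is_derive_Reals. apply derivable_pt_lim_plus; [apply Hder|apply derivable_pt_lim_id].
      * intros x _. apply (continuous_plus (dPsi d) (fun _ => 1)); [apply dpsi_cont; lra|apply continuous_const].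
  - apply is_RInt_ext with (fun r => dPsi d r - 1).
    + intros x Hx. rewrite Rmin_left in Hx by lra. rewrite Rmax_right in Hx by lra.
      rewrite sgn_pos by lra. change (dPsi d x - 1 = dPsi d x - 1). ring.
    + apply (@is_RInt_derive R_CompleteNormedModule (fun r => Psi d r - r) (fun r => dPsi d r - 1) 0 b).
      * intros x _. apply is_derive_Reals. apply derivable_pt_lim_minus; [apply Hder|apply derivable_pt_lim_id].
      * intros x _. apply (continuous_minus (dPsi d) (fun _ => 1)); [apply dpsi_cont; lra|apply continuous_const].
Qed.

Lemma psiI (I : R -> R) d a b : 0 < d ->
  improper_int (fun r => dPsi d r - sgn r) (2 * I d) ->
  a <= -d -> d <= b -> Psi d b - b - (Psi d a + a) = 2 * I d.
Proof.
  intros Hd HI Ha Hb.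
  apply Rminus_diag_uniq. apply Rabs_eq_0.
  apply Rle_antisym; [|apply Rabs_pos].
  apply le_by_eps. intros eps He. rewrite Rplus_0_l.
  destruct (HI eps He) as [M HM].
  set (a' := Rmin a (-(Rabs M) - 1)). set (b' := Rmax b (Rabs M + 1)).
  assert (a' <= a) by apply Rmin_l. assert (a' <= -(Rabs M) - 1) by apply Rmin_r.
  assert (b <= b') by apply Rmax_l. assert (Rabs M + 1 <= b') by apply Rmax_r.
  generalize (Rle_abs M) (Rle_abs (-M)); rewrite Rabs_Ropp; intros.
  destruct (HM a' b' ltac:(lra) ltac:(lra)) as [pr Hpr].
  rewrite <- (RInt_Reals _ _ _ pr) in Hpr.
  rewrite (is_RInt_unique _ _ _ _ (int_formula d a' b' Hd ltac:(lra) ltac:(lra))) in Hpr.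
  rewrite (psi_const_pos d b b') in Hpr by lra.
  rewrite (psi_const_neg d a a') in Hpr by lra.
  lra.
Qed.

End PsiSec.

Lemma I_bound (Psi dPsi ddPsi : R -> R -> R) CPsi (I : R -> R) d :
  potential_family Psi dPsi ddPsi CPsi -> 0 < d ->
  improper_int (fun r => dPsi d r - sgn r) (2 * I d) ->
  Rabs (I d) <= d * (CPsi + 1).
Proof.
  intros HP Hd HI.
  assert (E := psiI Psi dPsi ddPsi CPsi HP I d (-d) d Hd HI ltac:(lra) ltac:(lra)).
  destruct (HP d Hd) as [Hder [_ [_ [_ [_ [Hb _]]]]]].
  destruct (MVT_abs (Psi d) (dPsi d) (-d) d) as [c [Hc _]].
  - intros; apply Hder.
  - replace (d - - d) with (2 * d) in Hc by ring.
    rewrite (Rabs_pos_eq (2*d)) in Hc by lra.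
    assert (h := Hb c).
    assert (Rabs (Psi d d - Psi d (- d)) <= CPsi * (2 * d)) by (rewrite Hc; apply Rmult_le_compat_r; lra).
    apply abs_le_elim in H. apply abs_le_intro. lra.
Qed.
Theorem lemma5p1
  (c0 x0 r0 d0 D0 : R)
  (Psi dPsi ddPsi : R -> R -> R) (CPsi : R) (I : R -> R)
  (c1 c k : R)
  (R0 dR0 : R -> R)
  (delta0 C : R) (S dS : R -> R -> R)
  (Hc0 : 0 < c0 < 1) (Hx0 : 0 < x0) (Hr0 : 0 < r0) (Hd0 : 0 < d0) (HD0 : 0 < D0)
  (HPsi : potential_family Psi dPsi ddPsi CPsi)
  (HI : forall d, 0 < d -> improper_int (fun r => dPsi d r - sgn r) (2 * I d))
  (Hc1 : c0 < c1 < 1) (Hc : c0 < c < c1)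
  (Hk : 0 < k /\ adisp k = c /\ forall k', 0 < k' -> adisp k' = c -> k' = k)
  (* R_0 in R_c *)
  (HR0d : forall x, derivable_pt_lim R0 x (dR0 x))
  (HR0W : exists M, forall x y,
            Rabs (R0 x) <= M /\ Rabs (dR0 x) <= M /\
            Rabs (dR0 x - dR0 y) <= M * Rabs (x - y))
  (HR0eq : forall x, R0 (x - 1) <> 0 -> R0 x <> 0 -> R0 (x + 1) <> 0 ->
             exists l, derivable_pt_lim dR0 x l /\
               c ^ 2 * l = Delta1 (fun y => R0 y - sgn (R0 y)) x)
  (HR00 : R0 0 = 0)
  (HR0form : exists (Rbar : R -> R) (al be : R),
      (forall x, R0 x = Rbar x + al * (cos (k * x) - 1) + be * sin (k * x)) /\
      (exists lp, lim_pinf Rbar lp) /\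
      (exists alm bem lm,
         lim_minf (fun x => Rbar x - alm * (cos (k * x) - 1) - bem * sin (k * x)) lm))
  (HR0bd : forall x, Rabs (R0 x) <= D0 / (1 - c ^ 2))
  (HR0p : forall x, x0 < x -> r0 < R0 x)
  (HR0m : forall x, x < - x0 -> R0 x < - r0)
  (HR0mono : forall x, Rabs x < x0 -> d0 < dR0 x)
  (* the travelling waves R_delta = R_0 - I_delta + S_delta of the Main Theorem *)
  (Hdelta0 : 0 < delta0) (HC : 0 <= C)
  (HS : forall d, 0 < d < delta0 ->
     (forall x, derivable_pt_lim (S d) x (dS d x)) /\
     (forall x y, Rabs (dS d x - dS d y) <= C * Rabs (x - y)) /\
     S d 0 = 0 /\
     (forall x, Rabs (S d x) <= C * d ^ 2) /\
     (forall x, Rabs (dS d x) <= C * d) /\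
     (exists lp, lim_pinf (S d) lp) /\
     (exists am bm lm,
        lim_minf (fun x => S d x - am * (cos (k * x) - 1) - bm * sin (k * x)) lm) /\
     (forall x, exists l,
        derivable_pt_lim (fun y => dR0 y + dS d y) x l /\
        c ^ 2 * l = Delta1 (fun y => (R0 y - I d + S d y)
                                      - dPsi d (R0 y - I d + S d y)) x)) :
  exists K delta1, 0 < delta1 <= delta0 /\
    forall d, 0 < d < delta1 ->
    forall rp rm r0p r0m,
      mean_limit (fun x => R0 x - I d + S d x) rp ->
      mean_limit (fun x => R0 (- x) - I d + S d (- x)) rm ->
      mean_limit R0 r0p ->
      mean_limit (fun x => R0 (- x)) r0m ->
      Rabs (Upsilon (Phid (Psi d)) (dPhid (dPsi d)) rp rm
            - Upsilon Phi0 dPhi0 r0p r0m) <= K * d ^ 2.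

  assert (HCPsi : 0 <= CPsi).
  { destruct (HPsi 1 ltac:(lra)) as [_ [_ [_ [_ [_ [h _]]]]]].
    generalize (h 0) (Rabs_pos (dPsi 1 0)); lra. }
  destruct HR0W as [M HM].
  assert (HM' : forall x, Rabs (R0 x) <= M) by (intro x; apply (HM x x)).
  set (Q := CPsi + C + 2).
  assert (HQ : 0 < Q) by (unfold Q; lra).
  exists (2 * C), (Rmin delta0 (Rmin 1 (r0 / Q))).
  assert (0 < r0 / Q) by (apply Rdiv_lt_0_compat; lra).
  split.
  { split; [|apply Rmin_l]. apply Rmin_glb_lt; [lra|]. apply Rmin_glb_lt; lra. }
  intros d [Hd Hd1] rp rm r0p r0m Hrp Hrm Hr0p Hr0m.
  assert (Hdd0 : d < delta0) by (generalize (Rmin_l delta0 (Rmin 1 (r0 / Q))); lra).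
  assert (Hd1' : d < Rmin 1 (r0 / Q)) by (generalize (Rmin_r delta0 (Rmin 1 (r0 / Q))); lra).
  assert (Hdlt1 : d < 1) by (generalize (Rmin_l 1 (r0 / Q)); lra).
  assert (HdQ : d * Q < r0).
  { assert (d < r0 / Q) by (generalize (Rmin_r 1 (r0 / Q)); lra).
    apply (Rmult_lt_compat_r Q) in H0; [|lra].
    replace (r0 / Q * Q) with r0 in H0 by (field; lra). lra. }
  destruct (HS d (conj Hd Hdd0)) as [_ [_ [_ [HSb _]]]].
  assert (HIb := I_bound Psi dPsi ddPsi CPsi I d HPsi Hd (HI d Hd)).
  apply abs_le_elim in HIb.
  assert (B1 : r0 <= r0p <= M).
  { apply (mean_bounds R0 r0p M x0 r0 M Hx0 Hr0p HM').
    intros x Hx. split; [apply Rlt_le, HR0p; lra|]. generalize (abs_le_elim _ _ (HM' x)); lra. }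
  assert (B2 : - M <= r0m <= - r0).
  { apply (mean_bounds (fun x => R0 (- x)) r0m M x0 (-M) (-r0) Hx0 Hr0m (fun x => HM' (-x))).
    intros x Hx. split; [generalize (abs_le_elim _ _ (HM' (-x))); lra|].
    apply Rlt_le, HR0m; lra. }
  assert (E1 : Rabs (rp - r0p - - I d) <= C * d ^ 2).
  { apply (mean_diff _ _ rp r0p (- I d) (C * d ^ 2) Hrp Hr0p).
    intro x. replace (R0 x - I d + S d x - R0 x - - I d) with (S d x) by ring. apply HSb. }
  assert (E2 : Rabs (rm - r0m - - I d) <= C * d ^ 2).
  { apply (mean_diff _ _ rm r0m (- I d) (C * d ^ 2) Hrm Hr0m).
    intro x. replace (R0 (- x) - I d + S d (- x) - R0 (- x) - - I d) with (S d (- x)) by ring. apply HSb. }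
  apply abs_le_elim in E1. apply abs_le_elim in E2.
  assert (Hd2 : C * d ^ 2 <= C * d) by (simpl; nra).
  assert (Hrpd : d <= rp) by (unfold Q in HdQ; nra).
  assert (Hrmd : rm <= - d) by (unfold Q in HdQ; nra).
  destruct (HPsi d Hd) as [_ [_ [_ [_ [Hs _]]]]].
  assert (Ep : dPsi d rp = 1) by (rewrite Hs by (right; lra); apply sgn_pos; lra).
  assert (Em : dPsi d rm = -1) by (rewrite Hs by (left; lra); apply sgn_neg; lra).
  assert (EI := psiI Psi dPsi ddPsi CPsi HPsi I d rm rp Hd (HI d Hd) Hrmd Hrpd).
  unfold Upsilon, Phid, dPhid, Phi0, dPhi0.
  rewrite Ep, Em, (sgn_pos r0p), (sgn_neg r0m) by lra.
  rewrite (Rabs_pos_eq r0p) by lra. rewrite (Rabs_left r0m) by lra.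
  replace (Psi d rp) with (2 * I d + rp + Psi d rm + rm) by lra.
  apply abs_le_intro. split; nra.
Qed.
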